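(* Let $\varphi$ be a finite conjunction of literals of the two forms $x\in y$ and $x = y\setminus z$ (with $x,y,z$ set variables), with finite set of variables $\mathrm{Vars}(\varphi)$, and let $\bar n=|\mathrm{Vars}(\varphi)|$. Let $M$ be a set assignment over $\mathrm{Vars}(\varphi)$ satisfying $\varphi$; let $\bar x,\bar y\in\mathrm{Vars}(\varphi)$, let $\overline{M}$ be a set assignment over $\mathrm{Vars}(\varphi)$ satisfying $\varphi$ with $\overline{M}\bar x\neq \overline{M}\bar y$, and let $\mathfrak{t}$ be a set belonging to exactly one of $\overline{M}\bar x$, $\overline{M}\bar y$. Fix a set $\mathfrak{s}$ with $\mathrm{rk}(\mathfrak{s})>\mathrm{rk}(M)$. Define $\mathsf{V}_0=\{u\in\mathrm{Vars}(\varphi)\mid \mathfrak{t}\in\overline{M}u\}$; $\mathsf{V}_n=\{u\in\mathrm{Vars}(\varphi)\mid Mu\cap\{Mw\mid w\in\mathsf{V}_{n-1}\}\neq\emptyset\}$ for $n\ge1$; $M_0v=Mv\cup\{\mathfrak{s}\}$ if $v\in\mathsf{V}_0$ and $M_0v=Mv$ otherwise; for $n\ge1$, $M_nv=M_{n-1}v\cup\{M_{n-1}u\mid u\in\mathsf{V}_{n-1},\ Mu\in Mv\}$ if $v\in\mathsf{V}_n$ and $M_nv=M_{n-1}v$ otherwise. Then $M_{\bar n}\bar x\neq M_{\bar n}\bar y$.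
   Context: A set assignment is a map from a finite set of set variables into the von Neumann universe $\mathcal{V}=\bigcup_\alpha\mathcal{V}_\alpha$, $\mathcal{V}_\alpha=\bigcup_{\beta<\alpha}\mathcal{P}(\mathcal{V}_\beta)$; it satisfies $x\in y$ iff $Mx\in My$ and $x=y\setminus z$ iff $Mx=My\setminus Mz$. The rank $\mathrm{rk}(s)$ of a set $s$ is the least ordinal $\alpha$ with $s\subseteq\mathcal{V}_\alpha$, and $\mathrm{rk}(M)=\max\{\mathrm{rk}(Mx)\mid x\in\mathrm{dom}(M)\}$. *)

(* Defs.v *)
From mathcomp Require Import all_boot.
From Stdlib Require Import ClassicalEpsilon.
Set Implicit Arguments. Unset Strict Implicit. Unset Printing Implicit Defensive.

(* Sets as well-founded trees (Aczel/Werner model of the cumulative hierarchy). *)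
Inductive V : Type := sup (A : Type) (f : A -> V).

Definition idx (x : V) : Type := match x with sup A _ => A end.
Definition elem (x : V) : idx x -> V := match x with sup _ f => f end.

Fixpoint Veq (x y : V) {struct x} : Prop :=
  match x, y with
  | sup A f, sup B g =>
      (forall a, exists b, Veq (f a) (g b)) /\ (forall b, exists a, Veq (f a) (g b))
  end.

Definition Vin (x y : V) : Prop := exists b : idx y, Veq x (elem b).

Definition Vdiff (y z : V) : V :=
  sup (fun p : {b : idx y | ~ Vin (elem b) z} => elem (proj1_sig p)).

Definition Vunion (x y : V) : V :=
  sup (fun p : idx x + idx y =>
         match p with inl a => elem a | inr b => elem b end).

Definition Vsingleton (s : V) : V := sup (fun _ : unit => s).

Definition Vbigunion (I : Type) (F : I -> V) : V :=
  sup (fun p : {i : I & idx (F i)} => elem (projT2 p)).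

Definition Vsucc (x : V) : V := Vunion x (Vsingleton x).

Fixpoint Vrank (x : V) : V :=
  match x with sup A f => Vbigunion (fun a : A => Vsucc (Vrank (f a))) end.

Inductive lit (X : Type) : Type :=
| LIn   : X -> X -> lit X
| LDiff : X -> X -> X -> lit X.

Definition lit_vars (X : Type) (l : lit X) : seq X :=
  match l with LIn x y => [:: x; y] | LDiff x y z => [:: x; y; z] end.

Definition sat_lit (X : Type) (M : X -> V) (l : lit X) : Prop :=
  match l with
  | LIn x y => Vin (M x) (M y)
  | LDiff x y z => Veq (M x) (Vdiff (M y) (M z))
  end.

Definition sat (X : Type) (M : X -> V) (phi : seq (lit X)) : Prop :=
  forall l, List.In l phi -> sat_lit M l.

(* rk(M) = max of ranks = union of the ordinals rk(M v) *)
Definition rank_assign (X : Type) (M : X -> V) : V :=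
  Vbigunion (fun v : X => Vrank (M v)).

Fixpoint Vset (X : Type) (M Mbar : X -> V) (t : V) (n : nat) (u : X) : Prop :=
  match n with
  | 0 => Vin t (Mbar u)
  | n'.+1 => exists w, Vset M Mbar t n' w /\ Vin (M w) (M u)
  end.

Fixpoint Mn (X : Type) (M Mbar : X -> V) (t s : V) (n : nat) (v : X) : V :=
  match n with
  | 0 => if excluded_middle_informative (Vset M Mbar t 0 v)
         then Vunion (M v) (Vsingleton s) else M v
  | n'.+1 =>
      if excluded_middle_informative (Vset M Mbar t n'.+1 v)
      then Vunion (Mn M Mbar t s n' v)
             (sup (fun p : {u : X | Vset M Mbar t n' u /\ Vin (M u) (M v)} =>
                     Mn M Mbar t s n' (proj1_sig p)))
      else Mn M Mbar t s n' v
  end.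

(* Main.v *)
Require Import Defs.
From mathcomp Require Import all_boot.
From Stdlib Require Import Relations Wellfounded ClassicalEpsilon.
Set Implicit Arguments.
Unset Strict Implicit.

Lemma Veq_refl x : Veq x x.
Proof. induction x as [A f IH]; simpl; split; intro a; exists a; apply IH. Qed.

Lemma Veq_sym x y : Veq x y -> Veq y x.
Proof.
  revert y; induction x as [A f IH]; intros [B g]; simpl; intros [H1 H2]; split.
  - intro b; destruct (H2 b) as [a Ha]; exists a; apply IH; exact Ha.
  - intro a; destruct (H1 a) as [b Hb]; exists b; apply IH; exact Hb.
Qed.

Lemma Veq_trans x y z : Veq x y -> Veq y z -> Veq x z.
Proof.
  revert y z; induction x as [A f IH]; intros [B g] [C h]; simpl;
  intros [H1 H2] [H3 H4]; split.
  - intro a; destruct (H1 a) as [b Hb]; destruct (H3 b) as [c Hc];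
    exists c; exact (IH a _ _ Hb Hc).
  - intro c; destruct (H4 c) as [b Hb]; destruct (H2 b) as [a Ha];
    exists a; exact (IH a _ _ Ha Hb).
Qed.

Lemma Vin_l x x' y : Vin x y -> Veq x x' -> Vin x' y.
Proof.
  intros [b Hb] H; exists b; apply (Veq_trans (Veq_sym H) Hb).
Qed.

Lemma Vin_r x y y' : Vin x y -> Veq y y' -> Vin x y'.
Proof.
  destruct y as [B g]; destruct y' as [C h]; intros [b Hb] [H1 H2].
  destruct (H1 b) as [c Hc]; exists c; exact (Veq_trans Hb Hc).
Qed.

Lemma Vext x y : (forall z, Vin z x -> Vin z y) -> (forall z, Vin z y -> Vin z x) -> Veq x y.
Proof.
  destruct x as [A f]; destruct y as [B g]; intros H1 H2; simpl; split.
  - intro a; destruct (H1 (f a)) as [b Hb]; [exists a; apply Veq_refl|].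
    exists b; exact Hb.
  - intro b; destruct (H2 (g b)) as [a Ha]; [exists b; apply Veq_refl|].
    exists a; apply Veq_sym; exact Ha.
Qed.

Lemma in_sup {A : Type} (f : A -> V) z : Vin z (@Defs.sup A f) <-> exists a, Veq z (f a).
Proof. reflexivity. Qed.

Lemma in_union z x y : Vin z (Vunion x y) <-> Vin z x \/ Vin z y.
Proof.
  split.
  - intros [[a|b] H]; [left; exists a | right; exists b]; exact H.
  - intros [[a H]|[b H]]; [exists (inl a) | exists (inr b)]; exact H.
Qed.

Lemma in_single z s : Vin z (Vsingleton s) <-> Veq z s.
Proof. split; [intros [u H]; exact H | intro H; exists tt; exact H]. Qed.

Lemma in_bigunion (I : Type) (F : I -> V) z :
  Vin z (Vbigunion F) <-> exists i, Vin z (F i).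
Proof.
  split.
  - intros [[i b] H]; exists i; exists b; exact H.
  - intros [i [b H]]; exists (existT _ i b); exact H.
Qed.

Lemma in_rank z x : Vin z (Vrank x) <->
  exists a : idx x, Vin z (Vrank (elem a)) \/ Veq z (Vrank (elem a)).
Proof.
  destruct x as [A f]; simpl; split.
  - intro H; apply in_bigunion in H; destruct H as [a H].
    apply in_union in H; destruct H as [H|H]; exists a; [left; exact H| right].
    apply in_single in H; exact H.
  - intros [a H]; apply in_bigunion; exists a; apply in_union.
    destruct H as [H|H]; [left; exact H | right; apply in_single; exact H].
Qed.

Lemma rank_congr x y : Veq x y -> Veq (Vrank x) (Vrank y).
Proof.
  revert y; induction x as [A f IH]; intros [B g] Hxy.
  pose proof Hxy as [H1 H2].
  apply Vext; intros z Hz; apply in_rank in Hz; apply in_rank;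
  destruct Hz as [a Ha].
  - destruct (H1 a) as [b Hb]; exists b; pose proof (IH a _ Hb) as E; simpl in *.
    destruct Ha as [Ha|Ha]; [left; exact (Vin_r Ha E) | right; exact (Veq_trans Ha E)].
  - destruct (H2 a) as [b Hb]; exists b; pose proof (Veq_sym (IH b _ Hb)) as E; simpl in *.
    destruct Ha as [Ha|Ha]; [left; exact (Vin_r Ha E) | right; exact (Veq_trans Ha E)].
Qed.

Lemma rank_mono x y : Vin x y -> Vin (Vrank x) (Vrank y).
Proof.
  intros [b Hb]; apply in_rank; exists b; right; apply rank_congr; exact Hb.
Qed.

Lemma Acc_congr x : Acc Vin x -> forall x', Veq x x' -> Acc Vin x'.
Proof.
  induction 1 as [x Hacc IH]; intros x' E; constructor; intros z Hz.
  apply (IH z (Vin_r Hz (Veq_sym E)) z (Veq_refl z)).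
Qed.

Lemma Vin_wf : well_founded Vin.
Proof.
  intro y; induction y as [A f IH]; constructor; intros z [a Ha].
  exact (Acc_congr (IH a) (Veq_sym Ha)).
Qed.

Lemma no_cycle x : clos_trans V Vin x x -> False.
Proof.
  pose proof (wf_clos_trans V Vin Vin_wf x) as H.
  induction H as [x _ IH]; intro C; exact (IH x C C).
Qed.

Lemma ct_r x y y' : clos_trans V Vin x y -> Veq y y' -> clos_trans V Vin x y'.
Proof.
  intro H; revert y'; induction H as [x y H|x y z H1 IH1 H2 IH2]; intros y' E.
  - apply t_step; exact (Vin_r H E).
  - exact (t_trans _ _ _ _ _ H1 (IH2 _ E)).
Qed.

Section MnLemmas.
Variables (X : Type) (M Mbar : X -> V) (t s : V).

Lemma mn_A1 n v z : Vin z (Mn M Mbar t s n v) ->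
  Vin z (M v) \/ (Vset M Mbar t 0 v /\ Veq z s) \/
  exists k u, Vset M Mbar t k u /\ Veq z (Mn M Mbar t s k u).
Proof.
  revert v z; induction n as [|n IH]; intros v z; simpl.
  - destruct (excluded_middle_informative _) as [Hv|Hv]; [|intro H; left; exact H].
    intro H; apply in_union in H; destruct H as [H|H]; [left; exact H|].
    right; left; split; [exact Hv | apply in_single; exact H].
  - destruct (excluded_middle_informative _) as [Hv|Hv]; [|apply IH].
    intro H; apply in_union in H; destruct H as [H|H]; [apply IH; exact H|].
    destruct H as [[u [Hu Hin]] H]; right; right; exists n, u; split; assumption.
Qed.

Lemma mn_s n v : Vset M Mbar t 0 v -> Vin s (Mn M Mbar t s n v).
Proof.
  intro Hv; induction n as [|n IH]; simpl.
  - destruct (excluded_middle_informative _) as [Hd|C]; [|contradiction].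
    apply in_union; right; apply in_single; apply Veq_refl.
  - destruct (excluded_middle_informative _) as [Hd|Hd]; [|exact IH].
    apply in_union; left; exact IH.
Qed.

Lemma mn_B k u : Vset M Mbar t k u -> clos_trans V Vin s (Mn M Mbar t s k u).
Proof.
  revert u; induction k as [|k IH]; intros u Hu.
  - apply t_step; apply mn_s; exact Hu.
  - pose proof Hu as [w [Hw Hin]]; simpl.
    destruct (excluded_middle_informative _) as [Hd|C]; [|contradiction].
    apply (t_trans _ _ _ _ _ (IH w Hw)); apply t_step.
    apply in_union; right; exists (exist _ w (conj Hw Hin)); apply Veq_refl.
Qed.

Lemma s_notin_M v : Vin (rank_assign M) (Vrank s) -> ~ Vin s (M v).
Proof.
  intros Hs H; apply rank_mono in H.
  assert (H2 : Vin (Vrank s) (rank_assign M)).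
  { apply in_bigunion; exists v; exact H. }
  apply (no_cycle (x := Vrank s)); exact (t_trans _ _ _ _ _ (t_step _ _ _ _ H2) (t_step _ _ _ _ Hs)).
Qed.

Lemma key n x y : Vin (rank_assign M) (Vrank s) ->
  Vset M Mbar t 0 x -> ~ Vset M Mbar t 0 y ->
  ~ Veq (Mn M Mbar t s n x) (Mn M Mbar t s n y).
Proof.
  intros Hs Hx Hy E.
  pose proof (Vin_r (mn_s n Hx) E) as H.
  destruct (mn_A1 H) as [H1|[[H1 _]|[k [u [Hu Ek]]]]].
  - exact (s_notin_M Hs H1).
  - exact (Hy H1).
  - apply (no_cycle (x := s)); exact (ct_r (mn_B Hu) (Veq_sym Ek)).
Qed.
End MnLemmas.

Theorem lemma11 (X : finType) (phi : seq (lit X))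
  (Hvars : forall v : X, exists2 l, List.In l phi & v \in lit_vars l)
  (M Mbar : X -> V) (xb yb : X) (t s : V)
  (HM : sat M phi) (HMbar : sat Mbar phi)
  (Hneq : ~ Veq (Mbar xb) (Mbar yb))
  (Ht : (Vin t (Mbar xb) /\ ~ Vin t (Mbar yb)) \/ (Vin t (Mbar yb) /\ ~ Vin t (Mbar xb)))
  (Hs : Vin (rank_assign M) (Vrank s)) :
  ~ Veq (Mn M Mbar t s #|X| xb) (Mn M Mbar t s #|X| yb).
Proof.
  destruct Ht as [[H1 H2]|[H1 H2]].
  - exact (key (n:=#|X|) Hs H1 H2).
  - intro E; exact (key (n:=#|X|) Hs H1 H2 (Veq_sym E)).
Qed.
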